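(* Let $(\mathcal{X},d)$ be a finite metric space, $\mathcal{P}=\{P_1,\dots,P_t\}$ a partition of $\mathcal{X}$, and $b\ge 0$ an integer. For each $i\in[t]$, run the greedy (farthest-first) $k$-center procedure on $P_i$ with $k=b+1$, producing an ordered list of centers, and for $j\in[b+1]$ let $R_{i,j}$ be the first $j$ centers and $\hat c_i(j)=\mathrm{cost}(P_i,R_{i,j})$. Let $(\hat b_1,\dots,\hat b_t)$ be an optimal solution of $$\min \sum_{i=1}^t \hat c_i(b_i+1)\quad\text{subject to}\quad \sum_{i=1}^t b_i=b,\ b_i\in\{0,1,2,\dots\}\ \forall i\in[t],$$ and let $R_i=R_{i,\hat b_i+1}$ be the first $\hat b_i+1$ greedy centers of $P_i$. Then $\{R_i:i\in[t]\}$ is a feasible solution of the \textsc{BestReps} problem with objective value at most $2$ times the optimal value of \textsc{BestReps}.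
   Context: For $x\in P$ and $R\subseteq P$ nonempty, $\mathrm{cost}(P,R)=\max_{x\in P}\min_{r\in R}d(x,r)$. The \textsc{BestReps} problem with budget $b$: choose sets $R_i\subseteq P_i$, $i\in[t]$, minimizing $\sum_{i=1}^t\mathrm{cost}(P_i,R_i)$ subject to $|R_i|\ge1$ for all $i$ and $\sum_{i=1}^t(|R_i|-1)\le b$. The greedy $k$-center procedure on a set $P$: choose an arbitrary first center; at each subsequent step $j\le k$, choose as the $j$th center a point of $P$ at maximum distance from the set of the first $j-1$ centers (ties broken arbitrarily). (If $P$ has fewer than $j$ points, the first $j$ centers are understood to be all of $P$.) *)

(* Defs.v *)
From mathcomp Require Import all_boot all_order all_algebra.
From mathcomp Require Import reals.

Set Implicit Arguments.
Unset Strict Implicit.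
Unset Printing Implicit Defensive.

Import Order.TTheory GRing.Theory Num.Theory.
Local Open Scope ring_scope.

Section Defs.
Variables (R : realType) (T : finType) (d : T -> T -> R).

Definition is_metric : Prop :=
  [/\ forall x y, d x y = 0 <-> x = y,
      forall x y, d x y = d y x &
      forall x y z, d x z <= d x y + d y z].

(* min_{r in S} d(x, r); meaningful for nonempty S (the neutral element
   d x (head x (enum S)) is an element of the family when S is nonempty). *)
Definition mind (x : T) (S : {set T}) : R :=
  \big[Num.min/d x (head x (enum S))]_(r in S) d x r.

(* cost(P, S) = max_{x in P} min_{r in S} d(x, r)  (distances are >= 0,
   so 0 is a correct neutral element for the max). *)
Definition cost (P S : {set T}) : R :=
  \big[Num.max/0]_(x in P) mind x S.

(* c is a possible output (ordered list of centers) of the greedy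
   farthest-first k-center procedure on P, with arbitrary tie breaking:
   its length is min(k, |P|), its centers are distinct points of P, and
   each center after the first is at maximum distance from the previous
   centers among all points of P. *)
Definition greedy_run (P : {set T}) (k : nat) (c : seq T) : Prop :=
  [/\ size c = minn k #|P|, uniq c, all (mem P) c &
      forall j x0, (0 < j < size c)%N -> forall y, y \in P ->
        mind y [set z in take j c] <= mind (nth x0 c j) [set z in take j c]].

Definition prefix_set (c : seq T) (j : nat) : {set T} := [set z in take j c].

Definition bestreps_feasible (t : nat) (P : 'I_t -> {set T}) (b : nat)
  (Q : 'I_t -> {set T}) : Prop :=
  [/\ forall i, Q i \subset P i, forall i, (1 <= #|Q i|)%N &
      (\sum_(i < t) (#|Q i| - 1) <= b)%N].

Definition bestreps_obj (t : nat) (P Q : 'I_t -> {set T}) : R :=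
  \sum_(i < t) cost (P i) (Q i).

End Defs.

(* Main.v *)
Require Import Defs.
From mathcomp Require Import all_boot all_order all_algebra.
From mathcomp Require Import reals.
From mathcomp Require Import zify ring lra.
Import Order.TTheory GRing.Theory Num.Theory.
Local Open Scope ring_scope.

Section Aux.
Variables (R : realType) (T : finType) (d : T -> T -> R).
Hypothesis md : is_metric d.

Lemma d_refl x : d x x = 0.
Proof. by case: md => H _ _; apply/H. Qed.
Lemma d_sym x y : d x y = d y x.
Proof. by case: md => _ H _. Qed.
Lemma d_tri x y z : d x z <= d x y + d y z.
Proof. by case: md => _ _ H. Qed.
Lemma d_ge0 x y : 0 <= d x y.
Proof. have := d_tri x y x; rewrite d_refl (d_sym y x); lra. Qed.

Lemma mind_le x (S : {set T}) r : r \in S -> mind d x S <= d x r.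
Proof. by move=> rS; rewrite /mind (bigD1 r) //= ge_min lexx. Qed.

Lemma mind_att x (S : {set T}) : S != set0 ->
  exists2 r, r \in S & mind d x S = d x r.
Proof.
move=> /set0Pn [z zS].
rewrite /mind; apply: (big_ind (fun v => exists2 r, r \in S & v = d x r)).
- exists (head x (enum S)) => //.
  have: enum S != [::].
    by apply/eqP => E; have := mem_enum S z; rewrite E zS.
  by case: (enum S) (mem_enum S) => // a s Hm _ /=; rewrite -Hm inE eqxx.
- move=> a b [ra ? ->] [rb ? ->]; rewrite minEle.
  by case: ifP => _; [exists ra | exists rb].
- by move=> r rS; exists r.
Qed.

Lemma mind_ge0 x (S : {set T}) : 0 <= mind d x S.
Proof.
rewrite /mind; apply: (big_ind (fun u => 0 <= u)); first exact: d_ge0.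
  by move=> a b ha hb; rewrite le_min ha.
by move=> *; apply: d_ge0.
Qed.

Lemma mind_mono x (S1 S2 : {set T}) : S1 != set0 -> S1 \subset S2 ->
  mind d x S2 <= mind d x S1.
Proof.
move=> /(mind_att x) [r rS ->] /subsetP sub; exact: mind_le (sub _ rS).
Qed.

Lemma cost_ge (P S : {set T}) x : x \in P -> mind d x S <= cost d P S.
Proof. by move=> xP; rewrite /cost (bigD1 x) //= le_max lexx. Qed.

Lemma cost_le (P S : {set T}) v : 0 <= v -> (forall x, x \in P -> mind d x S <= v) ->
  cost d P S <= v.
Proof.
move=> v0 H; rewrite /cost; apply: (big_ind (fun u => u <= v)) => //.
by move=> a b ha hb; rewrite ge_max ha hb.
Qed.

Lemma cost_ge0 (P S : {set T}) : 0 <= cost d P S.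
Proof.
rewrite /cost; apply: (big_ind (fun u => 0 <= u)) => //.
by move=> a b ha hb; rewrite le_max ha.
by move=> *; apply: mind_ge0.
Qed.

Lemma cost_mono (P : {set T}) (S1 S2 : {set T}) : S1 != set0 -> S1 \subset S2 ->
  cost d P S2 <= cost d P S1.
Proof.
move=> ne sub; apply: cost_le; first exact: cost_ge0.
move=> x xP; have h1 := mind_mono x S1 S2 ne sub; have h2 := cost_ge P S1 x xP.
exact: le_trans h1 h2.
Qed.

Lemma greedy2 (P Q : {set T}) (b : nat) (c : seq T) :
  greedy_run d P b.+1 c -> Q \subset P -> (0 < #|Q|)%N -> (#|Q| <= b.+1)%N ->
  forall m, (#|Q| <= m)%N -> cost d P (prefix_set c m) <= 2 * cost d P Q.
Proof.
case=> sz un cPa gr QP Q0 Qb m Qm.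
set j := #|Q|.
have jc : (j <= size c)%N.
  by rewrite sz leq_min Qb /= subset_leq_card.
have cP : forall z, z \in c -> z \in P by move=> z zc; exact: (allP cPa z zc).
set S := prefix_set c j.
have memS : forall a y, (a < j)%N -> nth y c a \in S.
  move=> a y aj; rewrite inE -(nth_take y aj); apply: mem_nth.
  by rewrite size_takel.
have SP : forall z, z \in S -> z \in P.
  by move=> z; rewrite inE => /mem_take; exact: cP.
have Sne : S != set0.
  have [q _] : exists q, q \in Q by apply/set0Pn; rewrite -card_gt0.
  by apply/set0Pn; exists (nth q c 0); apply: memS.
have CQ0 := cost_ge0 P Q.
have Ssub : S \subset prefix_set c m.
  apply/subsetP => z; rewrite !inE -(take_takel c Qm); exact: mem_take.
apply: (le_trans (cost_mono P S (prefix_set c m) Sne Ssub)).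
apply: cost_le; first lra.
move=> y yP.
have pw : forall a b', (a < b' < j)%N -> mind d y S <= d (nth y c b') (nth y c a).
  move=> a b' /andP [ab bj].
  have bsz : (b' <= size c)%N by apply: leq_trans (ltnW bj) jc.
  have inb : nth y c a \in prefix_set c b'.
    rewrite inE -(nth_take y ab); apply: mem_nth; by rewrite size_takel.
  have hb : (0 < b' < size c)%N by apply/andP; split; lia.
  have g1 := gr b' y hb y yP.
  have : prefix_set c b' != set0 by apply/set0Pn; exists (nth y c a).
  move=> bne.
  have h2 : prefix_set c b' \subset S.
    apply/subsetP => z; rewrite !inE -(take_takel c (ltnW bj)); exact: mem_take.
  have h3 := mind_mono y _ _ bne h2.
  have h4 := mind_le (nth y c b') _ _ inb.
  rewrite /prefix_set in h3 h4 *.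
  have := le_trans h3 (le_trans g1 h4); by [].
have pw2 : forall p1 p2, p1 \in S -> p2 \in S -> p1 != p2 -> mind d y S <= d p1 p2.
  move=> p1 p2; rewrite !inE => h1 h2 ne.
  have e1 : nth y c (index p1 c) = p1 by apply: nth_index; exact: mem_take h1.
  have e2 : nth y c (index p2 c) = p2 by apply: nth_index; exact: mem_take h2.
  have i1 := index_ltn h1; have i2 := index_ltn h2.
  case: (ltngtP (index p1 c) (index p2 c)) => hh.
  - rewrite d_sym -e1 -e2; apply: pw; by rewrite hh.
  - rewrite -e1 -e2; apply: pw; by rewrite hh.
  - by move: ne; rewrite -e1 -e2 hh eqxx.
rewrite leNgt; apply/negP => Hlt.
case yS: (y \in S).
  have := mind_le y S y yS; rewrite d_refl; lra.
have exq : forall p, exists q, (q \in Q) && (mind d p Q == d p q).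
  have Qne : Q != set0 by rewrite -card_gt0.
  move=> p; have [q qQ e] := mind_att p Q Qne; exists q; by rewrite qQ e eqxx.
pose f p := xchoose (exq p).
have fP : forall p, f p \in Q /\ mind d p Q = d p (f p).
  by move=> p; have /andP [h /eqP e] := xchooseP (exq p).
set A := y |: S.
have AP : forall p, p \in A -> p \in P.
  by move=> p; rewrite in_setU1 => /orP [/eqP -> // | /SP].
have inj : {in A &, injective f}.
  move=> p1 p2 h1 h2 feq; apply/eqP; apply/negP => /negP ne.
  have D : mind d y S <= d p1 p2.
    move: h1 h2; rewrite !in_setU1 => /orP [/eqP e1 | h1] /orP [/eqP e2 | h2].
    - by move: ne; rewrite e1 e2 eqxx.
    - by rewrite e1; apply: mind_le.
    - by rewrite e2 d_sym; apply: mind_le.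
    - exact: pw2.
  have t1 := d_tri p1 (f p1) p2.
  have [_ m1] := fP p1; have [_ m2] := fP p2.
  have c1 := cost_ge P Q p1 (AP _ h1).
  have c2 := cost_ge P Q p2 (AP _ h2).
  rewrite (d_sym (f p1) p2) -m1 feq -m2 in t1.
  have H : mind d y S <= 2 * cost d P Q by lra.
  by move: Hlt; rewrite ltNge H.
have := eqP (introT imset_injP inj).
have : (#|f @: A| <= j)%N by apply: subset_leq_card; apply/subsetP => z /imsetP [p _ ->]; case: (fP p).
have -> : #|A| = j.+1.
  rewrite /A cardsU1 yS /S /prefix_set cardsE.
  have := card_uniqP (take_uniq j un); rewrite size_takel // => ->; by [].
lia.
Qed.
End Aux.

Theorem theorem3 (R : realType) (T : finType) (d : T -> T -> R)
  (t : nat) (P : 'I_t -> {set T}) (b : nat)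
  (c : 'I_t -> seq T) (bhat : 'I_t -> nat) :
  is_metric d ->
  (* P_1, ..., P_t is a partition of X into nonempty parts *)
  (forall i, P i != set0) ->
  (forall i j, i != j -> [disjoint P i & P j]) ->
  (forall x : T, exists i, x \in P i) ->
  (* c i is a run of greedy k-center on P_i with k = b + 1 *)
  (forall i, greedy_run d (P i) b.+1 (c i)) ->
  (* bhat is an optimal allocation *)
  (\sum_(i < t) bhat i)%N = b ->
  (forall b' : 'I_t -> nat, (\sum_(i < t) b' i)%N = b ->
     \sum_(i < t) cost d (P i) (prefix_set (c i) (bhat i).+1)
       <= \sum_(i < t) cost d (P i) (prefix_set (c i) (b' i).+1)) ->
  bestreps_feasible P b (fun i => prefix_set (c i) (bhat i).+1) /\
  (forall Q : 'I_t -> {set T}, bestreps_feasible P b Q ->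
     bestreps_obj d P (fun i => prefix_set (c i) (bhat i).+1)
       <= 2 * bestreps_obj d P Q).
Proof.
move=> md Pne _ _ gr Hsum Hopt; split.
  split.
  - move=> i; apply/subsetP => z; rewrite inE => /mem_take.
    by case: (gr i) => _ _ /allP H _ /H.
  - move=> i; rewrite card_gt0; apply/set0Pn.
    case: (gr i) => sz _ _ _.
    have [x _] : exists x, x \in P i by apply/set0Pn.
    exists (nth x (c i) 0); rewrite inE -(@nth_take (bhat i).+1 _ x 0 (ltn0Sn _)); apply: mem_nth.
    rewrite size_take_min sz; have := Pne i; rewrite -card_gt0; lia.
  - rewrite -Hsum; apply: leq_sum => i _.
    rewrite /prefix_set cardsE.
    apply: (@leq_trans (size (take (bhat i).+1 (c i)) - 1)).
      by apply: leq_sub2r; apply: card_size.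
    rewrite size_take_min; lia.
move=> Q [QP Q1 Qs].
case: (boolP [exists i : 'I_t, true]) => [/existsP [i0 _] | hn]; last first.
  rewrite /bestreps_obj !big1 ?mulr0 // => i _; by case/negP: hn; apply/existsP; exists i.
set s := (\sum_(i < t) (#|Q i| - 1))%N.
pose b2 i := (#|Q i| - 1 + (i == i0) * (b - s))%N.
have Hs2 : (\sum_(i < t) b2 i)%N = b.
  rewrite /b2 big_split /= -/s (bigD1 i0) //= eqxx mul1n big1 ?addn0 => [|k /negbTE -> //].
  lia.
apply: le_trans (Hopt b2 Hs2) _.
rewrite /bestreps_obj mulr_sumr; apply: ler_sum => i _.
have Qi : (#|Q i| - 1 <= s)%N by rewrite /s (bigD1 i) //= leq_addr.
have := Q1 i; move=> Q1i.
have hb : (#|Q i| <= b.+1)%N by lia.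
have hm : (#|Q i| <= (b2 i).+1)%N by rewrite /b2; lia.
exact: (@greedy2 R T d md (P i) (Q i) b (c i) (gr i) (QP i) Q1i hb _ hm).
Qed.
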